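(* Let $\Gamma$ be an antipodal tight graph $\mathrm{AT}4(p,q,2)$ with vertex set $X$, and let $x\in X$. If $W$ is an irreducible $T(x)$-module with endpoint $2$, then $W$ has diameter $0$ and is thin.
   Context: For integers $p\ge 1$, $q\ge 2$, an $\mathrm{AT}4(p,q,2)$ is a non-bipartite distance-regular antipodal double cover of diameter $4$ with intersection array $\{q(pq+p+q),\,(q^2-1)(p+1),\,q(p+q)/2,\,1;\ 1,\,q(p+q)/2,\,(q^2-1)(p+1),\,q(pq+p+q)\}$; such a graph is tight and $Q$-polynomial. Let $A$ be the adjacency matrix, $\partial$ the distance, $V=\mathbb{C}^X$, and for $0\le i\le 4$ let $E^*_i(x)$ be the diagonal matrix with $(E^*_i(x))_{yy}=1$ if $\partial(x,y)=i$ and $0$ otherwise. $T(x)$ is the subalgebra of $\mathrm{Mat}_X(\mathbb{C})$ generated by $A,E^*_0(x),\dots,E^*_4(x)$. For an irreducible $T(x)$-module $W$ (a nonzero $T(x)$-invariant subspace of $V$ with no invariant subspaces other than $0,W$), its endpoint is $\min\{i:E^*_i(x)W\neq0\}$, its diameter is $|\{i:E^*_i(x)W\ne 0\}|-1$, and $W$ is thin if $\dim E^*_i(x)W\le1$ for all $i$. *)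

(* Defs.v *)
From HB Require Import structures.
From mathcomp Require Import all_boot all_order all_algebra all_field.
Set Implicit Arguments. Unset Strict Implicit. Unset Printing Implicit Defensive.
Import GRing.Theory Num.Theory.

(* Vectors of V = C^X are row vectors indexed by
   'I_#|X| (via enum_val); a subspace of V is the row space of a square matrix. *)

Section Graph.
Variables (X : finType) (e : rel X).

Fixpoint ball (k : nat) (x : X) : {set X} :=
  match k with
  | 0 => [set x]
  | k'.+1 => ball k' x :|: [set y | [exists z in ball k' x, e z y]]
  end.

(* path distance (for a connected graph; #|X| if unreachable) *)
Definition gdist (x y : X) : nat := find (fun k => y \in ball k x) (iota 0 #|X|).

Definition simple_graph : Prop := symmetric e /\ irreflexive e.

Definition drg_with_array (d : nat) (b c : nat -> nat) : Prop :=
  [/\ simple_graph,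
      (forall x y : X, connect e x y),
      (forall x y : X, gdist x y <= d),
      (exists x y : X, gdist x y = d) &
      (forall (i : nat) (x y : X), gdist x y = i ->
          (i < d -> #|[set z | e y z & gdist x z == i.+1]| = b i) /\
          (0 < i -> #|[set z | e y z & gdist x z == i.-1]| = c i))].

Definition at4_b (p q : nat) (i : nat) : nat :=
  match i with
  | 0 => q * (p * q + p + q)
  | 1 => (q ^ 2 - 1) * (p + 1)
  | 2 => (q * (p + q)) %/ 2
  | 3 => 1
  | _ => 0
  end.
Definition at4_c (p q : nat) (i : nat) : nat :=
  match i with
  | 1 => 1
  | 2 => (q * (p + q)) %/ 2
  | 3 => (q ^ 2 - 1) * (p + 1)
  | 4 => q * (p * q + p + q)
  | _ => 0
  end.

Definition is_AT4 (p q : nat) : Prop :=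
  [/\ 1 <= p, 2 <= q, 2 %| q * (p + q) & drg_with_array 4 (at4_b p q) (at4_c p q)].

Local Open Scope ring_scope.
Local Notation n := #|X|.

Definition adjA : 'M[algC]_n :=
  \matrix_(u, v) (e (enum_val u) (enum_val v))%:R.

Definition Estar (x : X) (i : nat) : 'M[algC]_n :=
  \matrix_(u, v) ((u == v) && (gdist x (enum_val u) == i))%:R.

Inductive in_T (x : X) : 'M[algC]_n -> Prop :=
  | T_A : in_T x adjA
  | T_E i : (i <= 4)%N -> in_T x (Estar x i)
  | T_1 : in_T x 1%:M
  | T_add M N : in_T x M -> in_T x N -> in_T x (M + N)
  | T_scale a M : in_T x M -> in_T x (a *: M)
  | T_mul M N : in_T x M -> in_T x N -> in_T x (M *m N).

(* W (row space) is invariant under the action v |-> M v of every M in T(x)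
   (in row-vector form: w |-> w M^T) *)
Definition T_invariant (x : X) (W : 'M[algC]_n) : Prop :=
  forall M, in_T x M -> (W *m M^T <= W)%MS.

Definition irreducible_T_module (x : X) (W : 'M[algC]_n) : Prop :=
  [/\ W != 0, T_invariant x W &
      forall U : 'M[algC]_n, T_invariant x U -> (U <= W)%MS ->
        U = 0 \/ (U == W)%MS].

Definition EW (x : X) (W : 'M[algC]_n) (i : nat) : 'M[algC]_n := W *m (Estar x i)^T.

Definition endpoint (x : X) (W : 'M[algC]_n) : nat :=
  find (fun i => EW x W i != 0) (iota 0 5).

Definition module_diameter (x : X) (W : 'M[algC]_n) : nat :=
  (size [seq i <- iota 0 5 | EW x W i != 0]).-1.

Definition thin (x : X) (W : 'M[algC]_n) : Prop :=
  forall i, (i <= 4)%N -> (\rank (EW x W i) <= 1)%N.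

End Graph.

(* Main.v *)
Require Import Defs.
From mathcomp Require Import all_boot all_order all_algebra all_field.
From mathcomp Require Import zify.
Set Implicit Arguments. Unset Strict Implicit. Unset Printing Implicit Defensive.

Section Balls.
Variables (X : finType) (e : rel X).
Hypothesis esym : symmetric e.

Lemma ball_mono k x : ball e k x \subset ball e k.+1 x.
Proof. by rewrite /= subsetUl. Qed.

Lemma ball_le k m x y : k <= m -> y \in ball e k x -> y \in ball e m x.
Proof.
elim: m => [|m IH]; first by rewrite leqn0 => /eqP ->.
rewrite leq_eqVlt => /orP [/eqP -> //| /IH H /H]; exact: (subsetP (ball_mono _ _)).
Qed.

Lemma ball_step k x y z : y \in ball e k x -> e y z -> z \in ball e k.+1 x.
Proof.
move=> Hy Hyz; rewrite /= in_setU; apply/orP; right.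
by rewrite inE; apply/existsP; exists y; rewrite Hy.
Qed.

Lemma ball0 x y : (y \in ball e 0 x) = (y == x).
Proof. by rewrite /= in_set1. Qed.

Lemma ball_cat a b x y w : y \in ball e a x -> w \in ball e b y -> w \in ball e (a + b) x.
Proof.
move=> Hy; elim: b w => [|b IH] w; first by rewrite ball0 addn0 => /eqP ->.
rewrite /= in_setU => /orP [/IH Hw|].
  by rewrite addnS; apply: (subsetP (ball_mono _ _)).
rewrite inE => /existsP [t /andP [Ht Htw]].
by rewrite addnS; apply: ball_step (IH _ Ht) Htw.
Qed.

Lemma ball_sym k x y : y \in ball e k x -> x \in ball e k y.
Proof.
elim: k y => [|k IH] y; first by rewrite !ball0 eq_sym.
rewrite /= in_setU => /orP [/IH Hx|].
  by apply: (subsetP (ball_mono _ _)).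
rewrite inE => /existsP [t /andP [Ht Hty]].
have H1 : t \in ball e 1 y by apply: (ball_step (k:=0) (y:=y)); rewrite ?ball0 // esym.
by have := ball_cat H1 (IH _ Ht); rewrite add1n.
Qed.

Local Notation d := (gdist e).

Lemma gdist_le k x y : y \in ball e k x -> k < #|X| -> d x y <= k.
Proof.
move=> Hy Hk; rewrite /gdist; case: leqP => // Hlt.
have := before_find 0 Hlt; rewrite nth_iota // add0n Hy //.
Qed.

Lemma gdist_in x y : d x y < #|X| -> y \in ball e (d x y) x.
Proof.
move=> H; have Hh : has (fun k => y \in ball e k x) (iota 0 #|X|).
  by rewrite has_find size_iota.
by have := nth_find 0 Hh; rewrite nth_iota -?size_iota -?has_find ?add0n.
Qed.

Lemma gdist_notin x y m : m < d x y -> y \notin ball e m x.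
Proof.
move=> Hm; have Hs : d x y <= #|X| by rewrite /gdist -{2}(size_iota 0 #|X|) find_size.
have := before_find 0 Hm; rewrite nth_iota ?add0n ?(leq_trans Hm Hs) // => ->.
by [].
Qed.
End Balls.

Lemma cardP_sum (T : finType) (P : pred T) : #|[set z | P z]| = \sum_z (P z : nat).
Proof.
rewrite -sum1_card big_mkcond /=; apply: eq_bigr => z _; rewrite inE; by case: (P z).
Qed.

Section AT.
Variables (X : finType) (e : rel X) (p q : nat).
Hypothesis H : is_AT4 e p q.
Local Notation d := (gdist e).
Local Notation b := (at4_b p q).
Local Notation c := (at4_c p q).
Local Notation k := (at4_b p q 0).

Lemma p1 : 1 <= p. Proof. by case: H. Qed.
Lemma q2 : 2 <= q. Proof. by case: H. Qed.
Lemma esym : symmetric e. Proof. by case: H => _ _ _ [[]]. Qed.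
Lemma eirr : irreflexive e. Proof. by case: H => _ _ _ [[]]. Qed.
Lemma bnd x y : d x y <= 4. Proof. by case: H => _ _ _ [] _ _ ->. Qed.
Lemma cnts i x y : d x y = i ->
          (i < 4 -> #|[set z | e y z & d x z == i.+1]| = b i) /\
          (0 < i -> #|[set z | e y z & d x z == i.-1]| = c i).
Proof. by case: H => _ _ _ [] _ _ _ _ Hc; apply: Hc. Qed.

Lemma nX0 : 0 < #|X|.
Proof. by case: H => _ _ _ [] _ _ _ [x [y _]] _; apply/card_gt0P; exists x. Qed.

Lemma dxx x : d x x = 0.
Proof. by apply/eqP; rewrite -leqn0; apply: gdist_le; rewrite ?ball0 ?nX0. Qed.

Lemma kge : 10 <= k.
Proof. have := p1; have := q2; rewrite /=; nia. Qed.

Lemma nX : 9 < #|X|.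
Proof.
case: H => _ _ _ [] _ _ _ [x [y _]] _.
have [/(_ isT) Hc _] := cnts (dxx x).
apply: leq_trans kge _; rewrite -Hc; exact: max_card.
Qed.

Lemma dlt x y : d x y < #|X|.
Proof. have := bnd x y; have := nX; lia. Qed.

Lemma d_in x y : y \in ball e (d x y) x.
Proof. exact: gdist_in (dlt x y). Qed.

Lemma d_le k0 x y : k0 <= 8 -> y \in ball e k0 x -> d x y <= k0.
Proof. move=> Hk Hy; apply: gdist_le Hy _; have := nX; lia. Qed.

Lemma d0 x y : d x y = 0 -> y = x.
Proof. by move=> H0; have := d_in x y; rewrite H0 ball0 => /eqP. Qed.

Lemma dsym x y : d x y = d y x.
Proof.
have Hs : forall a b0, d a b0 <= d b0 a.
  move=> a b0; apply: d_le; first by have := bnd b0 a; lia.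
  exact: ball_sym esym _ _ _ (d_in _ _).
by apply/eqP; rewrite eqn_leq !Hs.
Qed.

Lemma dtri x y z : d x z <= d x y + d y z.
Proof.
apply: d_le; first by have := bnd x y; have := bnd y z; lia.
exact: ball_cat (d_in _ _) (d_in _ _).
Qed.

Lemma dedge x y z : e y z -> d x z <= (d x y).+1.
Proof.
move=> Hyz; apply: d_le; first by have := bnd x y; lia.
exact: ball_step (d_in _ _) Hyz.
Qed.

Lemma dedge2 x y z : e y z -> d x y <= (d x z).+1.
Proof. by rewrite esym; apply: dedge. Qed.

Lemma d1 x y : (d x y == 1) = e x y.
Proof.
apply/idP/idP.
  move/eqP=> H1; have := d_in x y; rewrite H1 /= in_setU in_set1.
  case/orP => [/eqP Hyx|]; first by move: H1; rewrite Hyx dxx.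
  rewrite inE => /existsP [t /andP [Ht Hty]].
  by move: Ht; rewrite in_set1 => /eqP Ht; rewrite -Ht.
move=> Hxy; rewrite eqn_leq d_le //=; last first.
  by apply: (ball_step (k:=0) (y:=x)); rewrite ?ball0.
rewrite lt0n; apply/negP => /eqP /d0 Hyx; by move: Hxy; rewrite Hyx eirr.
Qed.

Lemma deg y : #|[set z | e y z]| = k.
Proof.
have [/(_ isT) <- _] := cnts (dxx y).
by apply: eq_card => z; rewrite !inE d1 andbb.
Qed.

Lemma tri x y z : e y z -> d x z <= (d x y).+1 /\ d x y <= (d x z).+1.
Proof. by move=> Hyz; split; [apply: dedge | apply: dedge2]. Qed.

Lemma cnt_up x y : #|[set z | e y z & d x z == (d x y).+1]| = b (d x y).
Proof.
have [Hl|Hg] := ltnP (d x y) 4; first by have [/(_ Hl) -> _] := cnts (erefl (d x y)).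
have H4 : d x y = 4 by have := bnd x y; lia.
rewrite H4 /=; apply/eqP; rewrite cards_eq0; apply/eqP/setP => z; rewrite !inE.
by apply/negP => /andP [_ /eqP Hz]; have := bnd x z; rewrite Hz.
Qed.

Lemma cnt_dn x y : #|[set z | e y z & (d x z).+1 == d x y]| = c (d x y).
Proof.
case Hj: (d x y) => [|j].
  by apply/eqP; rewrite cards_eq0; apply/eqP/setP => z; rewrite !inE andbF.
have [_ /(_ isT) <-] := cnts Hj.
by apply: eq_card => z; rewrite !inE eqSS.
Qed.

Lemma cnt_eq x y : #|[set z | e y z & d x z == d x y]| = k - b (d x y) - c (d x y).
Proof.
have Hd := deg y; rewrite -cnt_up -cnt_dn -Hd !cardP_sum.
have -> : (\sum_z (e y z : nat) = \sum_z ((e y z && (d x z == (d x y).+1)) :nat)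
   + \sum_z ((e y z && (d x z == d x y)) : nat) + \sum_z ((e y z && ((d x z).+1 == d x y)) : nat))%N.
  rewrite -!big_split /=; apply: eq_bigr => z _.
  case Hyz: (e y z) => //=; have [H1 H2] := tri x Hyz.
  case: eqP => Ha; case: eqP => Hb; case: eqP => Hc //=; lia.
lia.
Qed.

Lemma cnt_gen x y i : 0 < i -> #|[set z | e y z & d x z == i]| =
   ((d x y == i.-1) * b i.-1 + (d x y == i) * (k - b i - c i) + (d x y == i.+1) * c i.+1)%N.
Proof.
move=> Hi.
case: (eqVneq (d x y) i.-1) => [Ha|Ha].
  have -> : i = (d x y).+1 by rewrite Ha; lia.
  by rewrite cnt_up /= !ltn_eqF ?mul0n ?addn0 ?mul1n // ltnW.
case: (eqVneq (d x y) i) => [Hb|Hb].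
  rewrite -Hb cnt_eq ltn_eqF //=; lia.
case: (eqVneq (d x y) i.+1) => [Hc|Hc].
  transitivity (c (d x y)); last by rewrite Hc /= !mul0n !add0n mul1n.
  by rewrite -cnt_dn; apply: eq_card => z; rewrite !inE Hc eqSS.
rewrite /=; apply/eqP; rewrite cards_eq0; apply/eqP/setP => z; rewrite !inE.
apply/negP => /andP [Hyz /eqP Hz]; have [H1 H2] := tri x Hyz.
rewrite Hz in H1 H2; move: Ha Hb Hc => /eqP Ha /eqP Hb /eqP Hc; lia.
Qed.

Definition g x i := #|[set y | d x y == i]|.

Lemma dc x i : g x i * b i = g x i.+1 * c i.+1.
Proof.
have L : (\sum_y ((d x y == i) * #|[set z | e y z & d x z == i.+1]|) = g x i * b i)%N.
  rewrite /g cardP_sum big_distrl /=; apply: eq_bigr => y _.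
  by case: eqP => Hy; rewrite ?mul0n // -Hy cnt_up.
have R : (\sum_z ((d x z == i.+1) * #|[set y | e z y & (d x y).+1 == d x z]|) = g x i.+1 * c i.+1)%N.
  rewrite /g cardP_sum big_distrl /=; apply: eq_bigr => y _.
  by case: eqP => Hy; rewrite ?mul0n // cnt_dn Hy.
rewrite -L -R.
under eq_bigr do rewrite cardP_sum big_distrr.
under [in RHS]eq_bigr do rewrite cardP_sum big_distrr.
rewrite exchange_big; apply: eq_bigr => z _; apply: eq_bigr => y _ /=.
rewrite esym; case: (e z y); rewrite /= ?muln0 //.
by case: eqP => Ha; case: eqP => Hb; case: eqP => Hc //=; lia.
Qed.


Lemma g0 x : g x 0 = 1.
Proof.
rewrite /g -(cards1 x); apply: eq_card => y; rewrite !inE.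
apply/eqP/eqP => [/d0 //| ->]; exact: dxx.
Qed.

Lemma b1pos : 0 < b 1.
Proof.
change (0 < (q ^ 2 - 1) * (p + 1)); rewrite muln_gt0 addn1 andbT subn_gt0 -mulnn.
have := q2; nia.
Qed.

Lemma g4 x : g x 4 = 1.
Proof.
have k0 : 0 < k by have := kge; lia.
have E0 := dc x 0; have E1 := dc x 1; have E2 := dc x 2; have E3 := dc x 3.
change (c 1) with 1 in E0; change (c 3) with (b 1) in E2; change (c 2) with (b 2) in E1.
change (c 4) with k in E3; change (b 3) with 1 in E3.
rewrite g0 muln1 mul1n in E0.
rewrite -E0 in E1.
have E2' : g x 3 * b 1 = k * b 1 by rewrite -E2 -E1.
have g3 : g x 3 = k by apply/eqP; rewrite -(eqn_pmul2r b1pos) E2'.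
rewrite g3 muln1 in E3.
by apply/eqP; rewrite -(eqn_pmul2r k0) mul1n -E3.
Qed.

Lemma uniq4 x u v : d x u = 4 -> d x v = 4 -> u = v.
Proof.
have /cards1P [a Ha] : #|[set y | d x y == 4]| == 1 by rewrite -/(g x 4) g4.
move=> Hu Hv.
have : u \in [set y | d x y == 4] by rewrite inE Hu.
have : v \in [set y | d x y == 4] by rewrite inE Hv.
by rewrite Ha !in_set1 => /eqP -> /eqP ->.
Qed.

Lemma A1 x z u : d x z = 1 -> d z u = 4 -> d x u = 3.
Proof.
move=> Hxz Hzu.
have Ht := dtri z x u; rewrite (dsym z x) Hxz Hzu in Ht.
have [Hl|Hg] := ltnP (d x u) 4; first by lia.
have H4 : d u x = 4 by rewrite dsym; have := bnd x u; lia.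
have := cnt_eq u x; rewrite H4 /=.
have -> : (q * (p * q + p + q) - 0 - q * (p * q + p + q) = 0)%N by lia.
move/eqP; rewrite cards_eq0 => /eqP/setP/(_ z); rewrite !inE -d1 Hxz (dsym u z) Hzu.
by [].
Qed.

Lemma A2 x u : d x u = 3 -> exists z, d x z = 1 /\ d z u = 4.
Proof.
move=> Hxu; have := cnt_up u x; rewrite dsym Hxu /=.
move=> Hc; have : 0 < #|[set z | e x z & d u z == 4]| by rewrite Hc.
case/card_gt0P => z; rewrite !inE -d1 => /andP [/eqP H1 /eqP H2].
by exists z; split; rewrite // (dsym z u).
Qed.

Local Open Scope ring_scope.
Import GRing.Theory Num.Theory.

Definition Dm i : 'M[algC]_#|X| := \matrix_(u, v) (d (enum_val u) (enum_val v) == i)%:R.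

Lemma sumX (F : X -> algC) : \sum_(w < #|X|) F (enum_val w) = \sum_z F z.
Proof.
rewrite (reindex (@enum_rank X)) /=; last by exists enum_val => z _; rewrite ?enum_rankK ?enum_valK.
by apply: eq_bigr => z _; rewrite enum_rankK.
Qed.

Lemma Drec i : (0 < i)%N -> adjA e *m Dm i =
   (b i.-1)%:R *: Dm i.-1 + (k - b i - c i)%:R *: Dm i + (c i.+1)%:R *: Dm i.+1.
Proof.
move=> Hi; apply/matrixP => u v; rewrite !mxE.
pose F := fun z => (e (enum_val u) z)%:R * (d z (enum_val v) == i)%:R :> algC.
transitivity (\sum_z F z).
  by rewrite -(sumX F); apply: eq_bigr => w _; rewrite /F !mxE.
have -> : \sum_z F z =
   (#|[set z | e (enum_val u) z & d (enum_val v) z == i]|)%:R :> algC.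
  rewrite cardP_sum natr_sum; apply: eq_bigr => z _; rewrite /F -natrM (dsym z).
  by case: (e _ z); case: (_ == i).
by rewrite cnt_gen // (dsym (enum_val v)) (mulnC (_ == i.-1)) (mulnC (_ == i)) (mulnC (_ == i.+1)) !natrD !natrM.
Qed.

Lemma D0 : Dm 0 = 1%:M.
Proof.
apply/matrixP => u v; rewrite !mxE.
have -> : (d (enum_val u) (enum_val v) == 0%N) = (u == v) :> bool.
  apply/eqP/eqP => [/d0 /enum_val_inj -> //| ->]; exact: dxx.
by [].
Qed.

Lemma D1 : Dm 1 = adjA e.
Proof. by apply/matrixP => u v; rewrite !mxE d1. Qed.

Lemma inT_sub x M N : in_T e x M -> in_T e x N -> in_T e x (M - N).
Proof. by move=> HM HN; rewrite -scaleN1r; apply: T_add => //; apply: T_scale. Qed.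

Lemma c_pos i : (0 < i <= 4)%N -> (0 < c i)%N.
Proof.
case: i => [//|[|[|[|[|//]]]]] _.
- by [].
- change (0 < (q * (p + q)) %/ 2)%N.
  rewrite divn_gt0 //; apply: leq_trans q2 _; rewrite leq_pmulr // addn_gt0; have := q2; case: q => // n _; rewrite orbT //.
- exact: b1pos.
- exact: (leq_trans _ kge).
Qed.

Lemma inT_D x i : (i <= 4)%N -> in_T e x (Dm i).
Proof.
have step : forall j, (0 < j < 4)%N -> in_T e x (Dm j.-1) -> in_T e x (Dm j) -> in_T e x (Dm j.+1).
  move=> j Hj H1 H2.
  have Hc : (c j.+1)%:R != 0 :> algC by rewrite pnatr_eq0 -lt0n c_pos //; lia.
  have -> : Dm j.+1 = (c j.+1)%:R^-1 *: (adjA e *m Dm j - (b j.-1)%:R *: Dm j.-1 - (k - b j - c j)%:R *: Dm j).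
    rewrite Drec; last by lia.
    set P := _ *: Dm j.-1; set Q := _ *: Dm j; set R := _ *: Dm j.+1.
    have -> : P + Q + R - P - Q = R.
      by rewrite -addrA -opprD addrAC subrr add0r.
    by rewrite /R scalerA mulVf // scale1r.
  apply: T_scale; apply: inT_sub; last by apply: T_scale.
  apply: inT_sub; last by apply: T_scale.
  by apply: T_mul => //; exact: T_A.
have I0 : in_T e x (Dm 0) by rewrite D0; exact: T_1.
have I1 : in_T e x (Dm 1) by rewrite D1; exact: T_A.
have I2 := step 1 isT I0 I1.
have I3 := step 2 isT I1 I2.
have I4 := step 3 isT I2 I3.
by case: i => [|[|[|[|[|//]]]]].
Qed.

Lemma mulE_r x i (M : 'M[algC]_#|X|) u v :
  (M *m Estar e x i) u v = M u v * (d x (enum_val v) == i)%:R.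
Proof.
rewrite mxE (bigD1 v) //= mxE eqxx /= big1 ?addr0 // => w /negbTE Hw.
by rewrite mxE Hw /= mulr0.
Qed.

Lemma sum_card (P : pred X) : \sum_z ((P z)%:R : algC) = (#|[set z | P z]|)%:R.
Proof. by rewrite cardP_sum natr_sum. Qed.

Lemma D4sq x i (P : X -> X -> bool) :
  (forall U V, #|[set z | [&& d U z == 4%N, d x z == i & d z V == 4%N]]| = P U V) ->
  Dm 4 *m Estar e x i *m Dm 4 = \matrix_(u, v) (P (enum_val u) (enum_val v))%:R.
Proof.
move=> HP; apply/matrixP => u v; rewrite !mxE.
pose F := fun z => ([&& d (enum_val u) z == 4%N, d x z == i & d z (enum_val v) == 4%N])%:R : algC.
transitivity (\sum_z F z).
  rewrite -(sumX F); apply: eq_bigr => w _; rewrite mulE_r !mxE /F.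
  by rewrite -!natrM; do 3 case: (_ == _).
by rewrite /F -HP -sum_card.
Qed.

Lemma E3id x : Estar e x 3 = Dm 4 *m Estar e x 1 *m Dm 4.
Proof.
rewrite (D4sq (P := fun U V => (U == V) && (d x U == 3%N))).
  apply/matrixP => u v; rewrite !mxE; congr (_%:R); congr (_ && _).
  by apply/eqP/eqP => [->|/enum_val_inj].
move=> U V; case: (boolP ((U == V) && (d x U == 3%N))) => [/andP [/eqP <- /eqP H3]|Hn].
  have [z [Hz1 Hz4]] := A2 H3.
  apply: (@eq_trans _ _ #|[set z]|); last by rewrite cards1.
  apply: eq_card => w; rewrite !inE.
  apply/idP/idP.
    case/and3P => /eqP Hw4 _ _; apply/eqP; apply: (uniq4 (x := U)) => //.
    by rewrite dsym.
  by move/eqP ->; rewrite Hz1 Hz4 (dsym U) Hz4 !eqxx.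
apply: (@eq_trans _ _ #|@set0 X|); last by rewrite cards0.
apply: eq_card => w; rewrite !inE; apply/negbTE.
apply/negP => /and3P [/eqP Hw4 /eqP Hw1 /eqP Hwv]; move: Hn.
have HUV : U = V by apply: (uniq4 (x := w)) => //; rewrite dsym.
by rewrite HUV eqxx (A1 Hw1) //= -HUV (dsym w).
Qed.

Lemma E4id x : Estar e x 4 = Dm 4 *m Estar e x 0 *m Dm 4.
Proof.
rewrite (D4sq (P := fun U V => (U == V) && (d x U == 4%N))).
  apply/matrixP => u v; rewrite !mxE; congr (_%:R); congr (_ && _).
  by apply/eqP/eqP => [->|/enum_val_inj].
move=> U V; case: (boolP ((U == V) && (d x U == 4%N))) => [/andP [/eqP <- /eqP H4]|Hn].
  apply: (@eq_trans _ _ #|[set x]|); last by rewrite cards1.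
  apply: eq_card => w; rewrite !inE.
  apply/idP/idP.
    by case/and3P => _ /eqP /d0 -> _.
  by move/eqP ->; rewrite dxx (dsym U) H4 !eqxx.
apply: (@eq_trans _ _ #|@set0 X|); last by rewrite cards0.
apply: eq_card => w; rewrite !inE; apply/negbTE.
apply/negP => /and3P [/eqP Hw4 /eqP /d0 Hw0 /eqP Hwv]; move: Hn; rewrite Hw0 in Hw4 Hwv.
have HUV : U = V by apply: (uniq4 (x := x)) => //; rewrite dsym.
by rewrite HUV eqxx /= Hwv.
Qed.

Lemma sumE x : \sum_(i < 5) Estar e x i = 1%:M.
Proof.
apply/matrixP => u v; rewrite summxE !mxE !big_ord_recr big_ord0 /= !mxE add0r.
have := bnd x (enum_val u).
case: (u == v); last by rewrite /= !addr0.
by case: (d x (enum_val u)) => [|[|[|[|[|]]]]] //= _; rewrite ?addr0 ?add0r.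
Qed.

Lemma W2 x (W : 'M[algC]_#|X|) : EW e x W 0 = 0 -> EW e x W 1 = 0 -> EW e x W 3 = 0 ->
  EW e x W 4 = 0 -> EW e x W 2 = W.
Proof.
move=> H0 H1 H3 H4.
have := sumE x; rewrite !big_ord_recr big_ord0 /= add0r => HS.
have : W *m (1%:M)^T = W by rewrite trmx1 mulmx1.
rewrite -HS !linearD /=.
by move: H0 H1 H3 H4; rewrite /EW => -> -> -> ->; rewrite !(addr0, add0r).
Qed.

Lemma w_inv x (W : 'M[algC]_#|X|) (w : 'rV[algC]_#|X|) a :
  EW e x W 0 = 0 -> EW e x W 1 = 0 -> EW e x W 3 = 0 -> EW e x W 4 = 0 ->
  (w <= W)%MS -> w *m (adjA e)^T = a *: w ->
  forall M, in_T e x M -> (w *m M^T <= w)%MS.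
Proof.
move=> H0 H1 H3 H4 HwW Hw M; elim => {M}.
- by rewrite Hw scalemx_sub.
- move=> i Hi; case/submxP: HwW => D HD.
  have HE : forall j, (j != 2)%N -> (j <= 4)%N -> (w *m (Estar e x j)^T <= w)%MS.
    move=> j Hj2 Hj4; rewrite HD -mulmxA.
    have -> : W *m (Estar e x j)^T = 0.
      move: Hj2 Hj4; case: j => [|[|[|[|[|//]]]]] //= _ _; by rewrite -/(EW e x W _).
    by rewrite mulmx0 sub0mx.
  case: (eqVneq i 2) => [->|Hi2]; last exact: HE.
  by rewrite HD -mulmxA -/(EW e x W 2) W2 // -HD.
- by rewrite trmx1 mulmx1.
- move=> M N _ HM _ HN; rewrite linearD /= mulmxDr; exact: addmx_sub.
- move=> c0 M _ HM; rewrite linearZ /= -scalemxAr; exact: scalemx_sub.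
- move=> M N _ HM _ HN; rewrite trmx_mul mulmxA.
  exact: submx_trans (submxMr _ HN) HM.
Qed.

Lemma D4_inv x (W : 'M[algC]_#|X|) : T_invariant e x W -> (W *m (Dm 4)^T <= W)%MS.
Proof. move=> HW; apply: HW; exact: inT_D. Qed.

Lemma EW3 x (W : 'M[algC]_#|X|) : T_invariant e x W -> EW e x W 1 = 0 -> EW e x W 3 = 0.
Proof.
move=> HW H1; rewrite /EW E3id !trmx_mul !mulmxA.
have : (W *m (Dm 4)^T *m (Estar e x 1)^T <= W *m (Estar e x 1)^T)%MS.
  exact: submxMr (D4_inv HW).
by rewrite -/(EW e x W 1) H1 submx0 => /eqP ->; rewrite mul0mx.
Qed.

Lemma EW4 x (W : 'M[algC]_#|X|) : T_invariant e x W -> EW e x W 0 = 0 -> EW e x W 4 = 0.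
Proof.
move=> HW H1; rewrite /EW E4id !trmx_mul !mulmxA.
have : (W *m (Dm 4)^T *m (Estar e x 0)^T <= W *m (Estar e x 0)^T)%MS.
  exact: submxMr (D4_inv HW).
by rewrite -/(EW e x W 0) H1 submx0 => /eqP ->; rewrite mul0mx.
Qed.

End AT.

Local Open Scope ring_scope.
Import GRing.Theory Num.Theory.

Lemma eigen_in n (W A : 'M[algC]_n) : W != 0 -> (W *m A <= W)%MS ->
  exists w : 'rV_n, [/\ (w <= W)%MS, w != 0 & exists a, w *m A = a *: w].
Proof.
move=> Wn0 HWA.
set B := row_base W.
have HB : (B *m A <= B)%MS by rewrite (eqmxMr _ (eq_row_base W)) eq_row_base.
set Mr := B *m A *m pinvmx B.
have HM : Mr *m B = B *m A by rewrite mulmxKpV.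
have r0 : (0 < \rank W)%N by rewrite lt0n mxrank_eq0.
have [a Ha] : exists a, root (char_poly Mr) a.
  by apply/closed_rootP; rewrite size_char_poly eqSS -lt0n.
have /eigenvalueP [v Hv vn0] : eigenvalue Mr a by rewrite eigenvalue_root_char.
exists (v *m B); split.
- by rewrite (submx_trans (submxMl _ _)) // eq_row_base.
- by rewrite mulmx_free_eq0 ?row_base_free.
- by exists a; rewrite -mulmxA -HM mulmxA Hv scalemxAl.
Qed.

Lemma lemma8p3_aux (X : finType) (e : rel X) (p q : nat) (x : X)
    (W : 'M[algC]_#|X|) :
  is_AT4 e p q ->
  irreducible_T_module e x W ->
  endpoint e x W = 2 ->
  module_diameter e x W = 0%N /\ thin e x W.
Proof.
move=> HA [Wn0 Winv Wirr] Hend.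
have E0 : EW e x W 0 = 0.
  by apply/eqP; move: Hend; rewrite /endpoint /=; case: (EW e x W 0 == 0).
have E1 : EW e x W 1 = 0.
  apply/eqP; move: Hend; rewrite /endpoint /= E0 eqxx /=.
  by case: (EW e x W 1 == 0).
have E2 : EW e x W 2 != 0.
  move: Hend; rewrite /endpoint /= E0 E1 eqxx /=.
  by case: (EW e x W 2 == 0).
have E3 := EW3 HA Winv E1.
have E4 := EW4 HA Winv E0.
split.
  by rewrite /module_diameter /= E0 E1 E3 E4 eqxx E2.
have HWA : (W *m (adjA e)^T <= W)%MS by apply: Winv; exact: T_A.
have [w [HwW wn0 [a Ha]]] := eigen_in Wn0 HWA.
have Hinv := w_inv HA E0 E1 E3 E4 HwW Ha.
have HU : T_invariant e x <<w>>%MS.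
  by move=> M HM; rewrite (eqmxMr _ (genmxE w)) genmxE; exact: Hinv.
have HUW : (<<w>> <= W)%MS by rewrite genmxE.
have Hrk : \rank <<w>>%MS = \rank w by rewrite genmxE.
have RW : (\rank W <= 1)%N.
  case: (Wirr _ HU HUW) => [U0|/eqmx_rank HR].
    by move: wn0; rewrite -mxrank_eq0 -Hrk U0 mxrank0.
  by rewrite -HR Hrk rank_leq_row.
move=> i Hi; case: (eqVneq i 2) => [->|Hi2].
  exact: leq_trans (mxrankM_maxl _ _) RW.
move: Hi Hi2; case: i => [|[|[|[|[|//]]]]] //= _ _;
  by rewrite ?E0 ?E1 ?E3 ?E4 mxrank0.
Qed.

Local Close Scope ring_scope.

Theorem lemma8p3 (X : finType) (e : rel X) (p q : nat) (x : X)
    (W : 'M[algC]_#|X|) :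
  is_AT4 e p q ->
  irreducible_T_module e x W ->
  endpoint e x W = 2 ->
  module_diameter e x W = 0 /\ thin e x W.
Proof. exact: lemma8p3_aux. Qed.
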